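(* Let $\mathbb P\in\mathcal P^o$, let $x^\star(\mathbb P)\in\arg\min\{\mathrm{Var}_{\mathbb P}(\ell(x,\xi)):x\in\arg\min_{x'\in\mathcal X}c(x',\mathbb P)\}$ be a minimizer of $c(\cdot,\mathbb P)$ of lowest variance, and for each $T$ let $\hat x^{\mathrm V}_T(\mathbb P)\in\arg\min_{x\in\mathcal X}\hat c_{\mathrm V}(x,\mathbb P,T)$ and $\hat c_{\mathrm V}^\star(\mathbb P,T)=\min_{x\in\mathcal X}\hat c_{\mathrm V}(x,\mathbb P,T)$. Then for all $T\in\mathbb N$, $$|\hat c_{\mathrm V}^\star(\mathbb P,T)-c^\star(\mathbb P)|\le\sqrt{\tfrac{2a_T}{T}\mathrm{Var}_{\mathbb P}(\ell(x^\star(\mathbb P),\xi))}.$$ If moreover $a_T/T\to0$, then $\hat c_{\mathrm V}^\star(\mathbb P,T)-c^\star(\mathbb P)=\sqrt{\frac{2a_T}{T}\mathrm{Var}_{\mathbb P}(\ell(x^\star(\mathbb P),\xi))}+o\big(\sqrt{a_T/T}\big)$ and $\mathrm{Var}_{\mathbb P}(\ell(\hat x^{\mathrm V}_T(\mathbb P),\xi))\to\mathrm{Var}_{\mathbb P}(\ell(x^\star(\mathbb P),\xi))$ as $T\to\infty$.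
   Context: $\Sigma=\{1,\dots,d\}$ finite, $\mathcal P$ the probability simplex and $\mathcal P^o$ its relative interior. $\mathcal X\subset\mathbb R^n$ compact, $\ell:\mathcal X\times\Sigma\to\mathbb R$ continuous in $x$. $c(x,\mathbb P)=\sum_i\ell(x,i)\mathbb P(i)$, $c^\star(\mathbb P)=\min_{x\in\mathcal X}c(x,\mathbb P)$, $\mathrm{Var}_{\mathbb P}(\ell(x,\xi))=\sum_i\mathbb P(i)(\ell(x,i)-c(x,\mathbb P))^2$. $(a_T)$ is a sequence of positive reals. SVP predictor: $\hat c_{\mathrm V}(x,\mathbb P,T)=c(x,\mathbb P)+\sqrt{\frac{2a_T}{T}\mathrm{Var}_{\mathbb P}(\ell(x,\xi))}$. *)

(* Defs.v *)
From HB Require Import structures.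
From mathcomp Require Import all_boot all_order all_algebra.
From mathcomp Require Import all_classical all_reals all_analysis.
Set Implicit Arguments. Unset Strict Implicit. Unset Printing Implicit Defensive.
Import Order.TTheory GRing.Theory Num.Theory.
Import numFieldNormedType.Exports.
Local Open Scope classical_set_scope.
Local Open Scope ring_scope.

Section Defs.
Variables (R : realType) (n d : nat).
(* Sigma = 'I_d, decisions x : 'rV[R]_n, P : 'I_d -> R a probability vector *)
Variable ell : 'rV[R]_n -> 'I_d -> R.

(* P in the relative interior of the probability simplex *)
Definition prob_interior (P : 'I_d -> R) : Prop :=
  (forall i, 0 < P i) /\ \sum_(i < d) P i = 1.

Definition cost (P : 'I_d -> R) (x : 'rV[R]_n) : R := \sum_(i < d) ell x i * P i.

Definition varP (P : 'I_d -> R) (x : 'rV[R]_n) : R :=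
  \sum_(i < d) P i * (ell x i - cost P x) ^+ 2.

Definition cstar (X : set 'rV[R]_n) (P : 'I_d -> R) : R :=
  inf [set cost P x | x in X].

Definition chatV (a : nat -> R) (P : 'I_d -> R) (T : nat) (x : 'rV[R]_n) : R :=
  cost P x + Num.sqrt (2 * a T / T%:R * varP P x).

Definition chatVstar (X : set 'rV[R]_n) (a : nat -> R) (P : 'I_d -> R) (T : nat) : R :=
  inf [set chatV a P T x | x in X].
End Defs.

(* Main.v *)
Require Import Defs.
From HB Require Import structures.
From mathcomp Require Import all_boot all_order all_algebra.
From mathcomp Require Import all_classical all_reals all_analysis.
From mathcomp Require Import lra ring.
Import Order.TTheory GRing.Theory Num.Theory.
Import numFieldNormedType.Exports.
Local Open Scope classical_set_scope.
Local Open Scope ring_scope.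
Section H.
Context {R : realType} {T : topologicalType}.
Lemma cont_const (k : R) : continuous (fun _ : T => k).
Proof. by move=> x; exact: cvg_cst. Qed.
Lemma cont_add (f g : T -> R) : continuous f -> continuous g -> continuous (fun x => f x + g x).
Proof. by move=> cf cg x; apply: cvgD; [exact: cf|exact: cg]. Qed.
Lemma cont_opp (f : T -> R) : continuous f -> continuous (fun x => - f x).
Proof. by move=> cf x; apply: cvgN; exact: cf. Qed.
Lemma cont_mul (f g : T -> R) : continuous f -> continuous g -> continuous (fun x => f x * g x).
Proof. by move=> cf cg x; apply: cvgM; [exact: cf|exact: cg]. Qed.
Lemma cont_norm (f : T -> R) : continuous f -> continuous (fun x => `|f x|).
Proof. by move=> cf x; apply: cvg_norm; exact: cf. Qed.
Lemma cont_sum d (F : 'I_d -> T -> R) : (forall i, continuous (F i)) ->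
  continuous (fun x => \sum_(i < d) F i x).
Proof.
move=> cF; apply: (@continuous_big _ _ +%R 0 xpredT) => //.
exact: add_continuous.
Qed.
Lemma cont_sq (f : T -> R) : continuous f -> continuous (fun x => f x ^+ 2).
Proof.
move=> cf; have -> : (fun x => f x ^+ 2) = (fun x => f x * f x).
  by apply/funext => x; rewrite expr2.
exact: cont_mul.
Qed.
Lemma sqrt_subadd (u w : R) : 0 <= u -> 0 <= w ->
  Num.sqrt (u + w) <= Num.sqrt u + Num.sqrt w.
Proof.
move=> u0 w0.
have s0 : 0 <= Num.sqrt u + Num.sqrt w by apply: addr_ge0; exact: sqrtr_ge0.
rewrite -(ger0_norm s0) -sqrtr_sqr ler_sqrt; last exact: sqr_ge0.
rewrite sqrrD !sqr_sqrtr //.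
have := mulr_ge0 (sqrtr_ge0 u) (sqrtr_ge0 w); lra.
Qed.
End H.
Theorem mainTheorem16 (R : realType) (n d : nat)
  (X : set 'rV[R]_n) (ell : 'rV[R]_n -> 'I_d -> R) (a : nat -> R)
  (P : 'I_d -> R) (xstar : 'rV[R]_n) (xhat : nat -> 'rV[R]_n) :
  compact X ->
  (forall i : 'I_d, {within X, continuous (fun x => ell x i)}) ->
  (forall T, 0 < a T) ->
  prob_interior P ->
  (* xstar minimizes c(., P) over X, with lowest variance among minimizers *)
  X xstar ->
  (forall y, X y -> cost ell P xstar <= cost ell P y) ->
  (forall x, X x -> (forall y, X y -> cost ell P x <= cost ell P y) ->
     varP ell P xstar <= varP ell P x) ->
  (* xhat T minimizes the SVP predictor over X *)
  (forall T, X (xhat T)) ->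
  (forall T y, X y -> chatV ell a P T (xhat T) <= chatV ell a P T y) ->
  (forall T : nat, (0 < T)%N ->
     `| chatVstar ell X a P T - cstar ell X P |
       <= Num.sqrt (2 * a T / T%:R * varP ell P xstar))
  /\
  ((fun T => a T / T%:R) @ \oo --> (0 : R) ->
     (fun T => chatVstar ell X a P T - cstar ell X P
               - Num.sqrt (2 * a T / T%:R * varP ell P xstar))
       =o_\oo (fun T => Num.sqrt (a T / T%:R))
     /\ (fun T => varP ell P (xhat T)) @ \oo --> varP ell P xstar).
Proof.
move=> cX cell apos [Ppos P1] Xs smin svar Xh hmin.
have Vge0 x : 0 <= varP ell P x.
  by apply: sumr_ge0 => i _; apply: mulr_ge0; [exact: ltW|exact: sqr_ge0].
have infat (S : set R) x : S x -> (forall y, S y -> x <= y) -> inf S = x.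
  move=> Sx lb; apply/le_anti/andP; split.
    by apply: ge_inf => //; exists x => y /lb.
  by apply: lb_le_inf; [exists x|move=> y /lb].
have chE T : chatVstar ell X a P T = chatV ell a P T (xhat T).
  apply: infat; first by exists (xhat T).
  by move=> _ [y Xy <-]; exact: hmin.
have csE : cstar ell X P = cost ell P xstar.
  apply: infat; first by exists xstar.
  by move=> _ [y Xy <-]; exact: smin.
have s_ge0 T : 0 <= 2 * a T / T%:R.
  by apply: divr_ge0; [apply: mulr_ge0 => //; exact: ltW|exact: ler0n].
have dlo T : cost ell P xstar <= chatV ell a P T (xhat T).
  by rewrite /chatV -[X in X <= _]addr0; apply: lerD; [exact: smin|exact: sqrtr_ge0].
have dhi T : chatV ell a P T (xhat T) <= chatV ell a P T xstar := hmin T xstar Xs.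
have VTle T : (0 < T)%N -> varP ell P (xhat T) <= varP ell P xstar.
  move=> T0.
  have sgt0 : 0 < 2 * a T / T%:R by apply: divr_gt0; [apply: mulr_gt0|rewrite ltr0n].
  have h1 := dhi T; have h2 := smin _ (Xh T); move: h1; rewrite /chatV => h1.
  have : Num.sqrt (2 * a T / T%:R * varP ell P (xhat T)) <=
         Num.sqrt (2 * a T / T%:R * varP ell P xstar) by lra.
  rewrite ler_sqrt; last by apply: mulr_ge0.
  by rewrite ler_pM2l.
split.
  move=> T T0; rewrite chE csE ger0_norm; last by rewrite subr_ge0.
  by move: (dhi T); rewrite {2}/chatV; lra.
move=> aT0.
have cc : {within X, continuous (cost ell P)}.
  rewrite /from_subspace /cost; apply: cont_sum => i.
  by apply: cont_mul; [exact: cell|exact: cont_const].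
have cV : {within X, continuous (varP ell P)}.
  rewrite /from_subspace /varP; apply: cont_sum => i.
  apply: cont_mul; first exact: cont_const.
  apply: cont_sq; apply: cont_add; [exact: cell|apply: cont_opp; exact: cc].
have T0near : \forall T \near \oo, (0 < T)%N by exact: nbhs_infty_gt.
have key eps : 0 < eps -> \forall T \near \oo, varP ell P xstar - eps < varP ell P (xhat T).
  move=> e0.
  pose phi x := cost ell P x - cost ell P xstar +
     (varP ell P x - varP ell P xstar + eps + `|varP ell P x - varP ell P xstar + eps|).
  have cphi : {within X, continuous phi}.
    rewrite /from_subspace /phi.
    apply: cont_add; first by apply: cont_add; [exact: cc|exact: cont_const].
    have ct : continuous (fun x : subspace X => varP ell P x - varP ell P xstar + eps).
      by apply: cont_add; [apply: cont_add; [exact: cV|exact: cont_const]|exact: cont_const].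
    by apply: cont_add => //; exact: cont_norm.
  have [m Xm mmin] := EVT_min_rV (ex_intro _ xstar Xs) cX cphi.
  have phipos x : X x -> 0 < phi x.
    move=> Xx; rewrite /phi.
    have tn : 0 <= varP ell P x - varP ell P xstar + eps +
        `|varP ell P x - varP ell P xstar + eps|.
      by have := ler_norm (- (varP ell P x - varP ell P xstar + eps)); rewrite normrN; lra.
    have [lt|ge] := ltP (cost ell P xstar) (cost ell P x).
      by apply: ltr_pwDl => //; rewrite subr_gt0.
    have mx : forall y, X y -> cost ell P x <= cost ell P y.
      by move=> y Xy; apply: le_trans ge _; exact: smin.
    have := svar x Xx mx => hv.
    have tp : 0 < varP ell P x - varP ell P xstar + eps by lra.
    rewrite (gtr0_norm tp); have := smin x Xx; lra.
  set delta := phi m.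
  have dpos : 0 < delta by apply: phipos; rewrite -inE.
  have kpos : 0 < delta ^+ 2 / (2 * (varP ell P xstar + 1)).
    apply: divr_gt0; first exact: exprn_gt0.
    by apply: mulr_gt0 => //; have := Vge0 xstar; lra.
  have qnear := cvgr_lt _ aT0 _ kpos.
  near=> T.
  have T0 : (0 < T)%N by near: T.
  have qlt : a T / T%:R < delta ^+ 2 / (2 * (varP ell P xstar + 1)).
    by near: T; exact: qnear.
  have q0 : 0 <= a T / T%:R by apply: divr_ge0; [exact: ltW|exact: ler0n].
  have V0 := Vge0 xstar.
  have sVlt : 2 * a T / T%:R * varP ell P xstar < delta ^+ 2.
    rewrite -mulrA.
    move: qlt; rewrite ltr_pdivlMr; last by lra.
    move=> qlt.
    have : a T / T%:R * varP ell P xstar <= a T / T%:R * (varP ell P xstar + 1).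
      by apply: ler_wpM2l => //; lra.
    lra.
  have sqlt : Num.sqrt (2 * a T / T%:R * varP ell P xstar) < delta.
    rewrite -(ger0_norm (ltW dpos)) -sqrtr_sqr ltr_sqrt //; exact: exprn_gt0.
  have hd := dhi T; move: hd; rewrite /chatV => hd.
  have sq0 := sqrtr_ge0 (2 * a T / T%:R * varP ell P (xhat T)).
  have cd : cost ell P (xhat T) - cost ell P xstar < delta by lra.
  have := mmin (xhat T); rewrite inE => /(_ (Xh T)); rewrite -/delta /phi => pd.
  have tpos : 0 < varP ell P (xhat T) - varP ell P xstar + eps.
    rewrite ltNge; apply/negP => tle.
    move: pd; rewrite (ler0_norm tle); lra.
  lra.
split.
  apply/eqoP => eps e0.
  have e2 : 0 < eps ^+ 2 / 2 by apply: divr_gt0 => //; exact: exprn_gt0.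
  have kn := key _ e2.
  near=> T.
  have T0 : (0 < T)%N by near: T.
  have kT : varP ell P xstar - eps ^+ 2 / 2 < varP ell P (xhat T).
    by near: T; exact: kn.
  have VT := VTle T T0.
  rewrite chE csE.
  set q := a T / T%:R.
  have q0 : 0 <= q by apply: divr_ge0; [exact: ltW|exact: ler0n].
  have sE : 2 * a T / T%:R = 2 * q by rewrite /q mulrA.
  move: (dhi T) (smin _ (Xh T)); rewrite /chatV sE => hd hc.
  set Vs := varP ell P xstar; set Vh := varP ell P (xhat T).
  have Vh0 : 0 <= Vh by exact: Vge0.
  have sub := @sqrt_subadd R (2 * q * Vh) (2 * q * (Vs - Vh)).
  have E : 2 * q * Vh + 2 * q * (Vs - Vh) = 2 * q * Vs by ring.
  rewrite E in sub.
  have q2 : 0 <= 2 * q by lra.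
  have dV : 0 <= Vs - Vh by rewrite subr_ge0.
  have sub' := sub (mulr_ge0 q2 Vh0) (mulr_ge0 q2 dV).
  have b2 : Num.sqrt (2 * q * (Vs - Vh)) <= eps * Num.sqrt q.
    rewrite -(ger0_norm (ltW e0)) -sqrtr_sqr -sqrtrM; last exact: sqr_ge0.
    rewrite ler_sqrt; last by apply: mulr_ge0 => //; exact: sqr_ge0.
    have : Vs - Vh <= eps ^+ 2 / 2.
      move: kT; rewrite -/Vs -/Vh => kT; lra.
    move=> h; have := ler_wpM2l q0 h; rewrite /Vs.
    have : eps ^+ 2 * q = 2 * (q * (eps ^+ 2 / 2)) by field.
    move=> ->; have -> : 2 * q * (Vs - Vh) = 2 * (q * (Vs - Vh)) by ring.
    move=> hh; rewrite ler_pM2l //; exact: hh.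
  rewrite (ger0_norm (sqrtr_ge0 q)) ler0_norm; last by lra.
  lra.
apply/cvgrPdist_lt => e e0.
have kn := key _ e0.
near=> T.
have T0 : (0 < T)%N by near: T.
have kT : varP ell P xstar - e < varP ell P (xhat T) by near: T; exact: kn.
have VT := VTle T T0.
rewrite ger0_norm; [lra|lra].
Unshelve. all: by end_near.
Qed.
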